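(* Let $k=\mathbb{F}_3$ and let $M$ be a $7\times 7$ matrix over $k$ that is self-adjoint for the bilinear form $\langle x,y\rangle=x_1y_7+x_2y_6+\dots+x_7y_1$ on $k^7$ and regular semisimple (i.e. has $7$ distinct eigenvalues in an algebraic closure of $k$). Then $M$ is not properly blockwise triangular: there is no $m\in\{1,\dots,6\}$ such that $M_{ij}=0$ for all $i>m$ and $j\le m$.
   Context: $M_{ij}$ denotes the entry in row $i$ and column $j$. Self-adjointness for this form means $M_{ij}=M_{8-j,8-i}$ for all $i,j$. *)

(* Defs.v *)
From HB Require Import structures.
From mathcomp Require Import all_boot all_order all_algebra all_field.
Set Implicit Arguments. Unset Strict Implicit. Unset Printing Implicit Defensive.
Import GRing.Theory.
Local Open Scope ring_scope.

(* Self-adjointness for <x,y> = x_1 y_n + ... + x_n y_1 (0-indexed: rev_ord):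
   M_{ij} = M_{n+1-j, n+1-i}. *)
Definition antidiag_self_adjoint (F : nzRingType) (n : nat) (M : 'M[F]_n) : Prop :=
  forall i j : 'I_n, M i j = M (rev_ord j) (rev_ord i).

(* Regular semisimple: M has n distinct eigenvalues in an algebraic closure of F
   (any algebraically closed field extension of F). *)
Definition regular_semisimple (F : fieldType) (n : nat) (M : 'M[F]_n) : Prop :=
  exists (L : closedFieldType) (f : {rmorphism F -> L}) (s : seq L),
    [/\ uniq s, size s = n & forall a, a \in s -> eigenvalue (map_mx f M) a].

Definition properly_block_triangular (F : nzRingType) (n : nat) (M : 'M[F]_n) : Prop :=
  exists m : nat, [/\ (1 <= m)%N, (m <= n.-1)%N &
    forall i j : 'I_n, (m <= i)%N -> (j < m)%N -> M i j = 0].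

(* Main.v *)
Require Import Defs.
From HB Require Import structures.
From mathcomp Require Import all_boot all_order all_algebra all_field.
From mathcomp Require Import all_fingroup zify.
Import GRing.Theory.
Local Open Scope ring_scope.
Module Helpers.
Set Implicit Arguments. Unset Strict Implicit.

Lemma cp_ublock (R : comNzRingType) k l (N : 'M[R]_(k + l)) :
  dlsubmx N = 0 -> char_poly N = char_poly (ulsubmx N) * char_poly (drsubmx N).
Proof.
move=> H; rewrite -{1}(submxK N) H /char_poly /char_poly_mx map_block_mx /= map_mx0.
rewrite scalar_mx_block opp_block_mx add_block_mx oppr0 !addr0.
by rewrite det_ublock.
Qed.

Lemma cp_revT (R : comNzRingType) n (A : 'M[R]_n) :
  char_poly (\matrix_(i, j) A (rev_ord j) (rev_ord i)) = char_poly A.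
Proof.
pose s : {perm 'I_n} := perm (@rev_ord_inj n).
rewrite /char_poly.
have -> : char_poly_mx (\matrix_(i, j) A (rev_ord j) (rev_ord i))
   = (row_perm s (col_perm s (char_poly_mx A)))^T.
  apply/matrixP => i j; rewrite !mxE !permE (inj_eq rev_ord_inj) eq_sym.
  by [].
rewrite det_tr row_permE col_permE !det_mulmx !det_perm odd_permV.
by rewrite mulrC -mulrA -expr2 sqrr_sign mulr1.
Qed.

Lemma block_sym (R : nzRingType) n m (N : 'M[R]_n) :
  (forall i j, N i j = N (rev_ord j) (rev_ord i)) ->
  (forall i j : 'I_n, (m <= i)%N -> (j < m)%N -> N i j = 0) ->
  (forall i j : 'I_n, (n - m <= i)%N -> (j < n - m)%N -> N i j = 0).
Proof.
move=> Hsa Hb i j hi hj; rewrite Hsa; apply: Hb => /=.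
  have := ltn_ord i; lia.
have := ltn_ord i; have := ltn_ord j; lia.
Qed.

Lemma G (L : closedFieldType) m p (N : 'M[L]_(m + p + m)) :
  (0 < m)%N -> (forall i j, N i j = N (rev_ord j) (rev_ord i)) ->
  (forall i j : 'I_(m + p + m), (m <= i)%N -> (j < m)%N -> N i j = 0) ->
  (forall i j : 'I_(m + p + m), (m + p <= i)%N -> (j < m + p)%N -> N i j = 0) ->
  forall s, uniq s -> size s = (m + p + m)%N -> (forall a, a \in s -> eigenvalue N a) -> False.
Proof.
move=> m0 Hsa HB1 HB2 s us ss Hev.
have Hdl : dlsubmx N = 0.
  apply/matrixP => i j; rewrite !mxE; apply: HB2 => /=; [exact: leq_addr | exact: ltn_ord].
have cpN := cp_ublock Hdl.
set U := ulsubmx N; set D := drsubmx N.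
have HdlU : dlsubmx U = 0.
  apply/matrixP => i j; rewrite !mxE; apply: HB1 => /=; [exact: leq_addr | exact: ltn_ord].
have cpU := cp_ublock HdlU.
have cpD : char_poly D = char_poly (ulsubmx U).
  rewrite -[RHS]cp_revT; congr char_poly; apply/matrixP => i j.
  transitivity (N (rshift (m + p) i) (rshift (m + p) j)); first by rewrite !mxE.
  rewrite Hsa !mxE; congr (N _ _); apply/val_inj => /=. 1,2: lia.
have [r Hr] : exists r, root (char_poly (ulsubmx U)) r.
  by apply/closed_rootP; rewrite size_char_poly; lia.
have HrU : root (char_poly U) r by rewrite cpU rootM Hr.
have HrD : root (char_poly D) r by rewrite cpD.
have Hs' : forall x, x \in s -> root (char_poly U) x || root (char_poly D) x.
  by move=> x /Hev; rewrite eigenvalue_root_char cpN rootM.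
have h1 : (size (filter (root (char_poly U)) s) < size (char_poly U))%N.
  apply: max_poly_roots; first exact: monic_neq0 (char_poly_monic _).
    exact: filter_all.
  exact: filter_uniq.
have h2 : (size (r :: filter (predC (root (char_poly U))) s) < size (char_poly D))%N.
  apply: max_poly_roots; first exact: monic_neq0 (char_poly_monic _).
    rewrite /= HrD /=; apply/allP => x; rewrite mem_filter => /andP[/= nU xs].
    by have := Hs' x xs; rewrite (negbTE nU).
  by rewrite /= mem_filter /= HrU /= filter_uniq.
move: h1 h2; rewrite /= !size_char_poly !size_filter.
rewrite -(count_predC (root (char_poly U)) s) in ss.
set c1 := count _ s in ss *; set c2 := count _ s in ss *. lia.
Qed.
End Helpers.
Import Helpers.

Theorem lemma2p5 (M : 'M['F_3]_7) :
  antidiag_self_adjoint M -> regular_semisimple M ->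
  ~ properly_block_triangular M.
Proof.
move=> Hsa [L [f [s [us ss Hev]]]] [m0 [h1 h6 Hb]].
set N := map_mx f M.
have HsaN : forall i j, N i j = N (rev_ord j) (rev_ord i).
  by move=> i j; rewrite !mxE Hsa.
have HbN : forall i j : 'I_7, (m0 <= i)%N -> (j < m0)%N -> N i j = 0.
  by move=> i j a b; rewrite mxE Hb // rmorph0.
have HbN' := block_sym HsaN HbN.
clear Hb.
case: m0 h1 h6 HbN HbN' => [|[|[|[|[|[|[|m0]]]]]]] // h1 h6 HbN HbN'.
- exact: (@G L 1 5 N isT HsaN HbN HbN' s us ss Hev).
- exact: (@G L 2 3 N isT HsaN HbN HbN' s us ss Hev).
- exact: (@G L 3 1 N isT HsaN HbN HbN' s us ss Hev).
- exact: (@G L 3 1 N isT HsaN HbN' HbN s us ss Hev).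
- exact: (@G L 2 3 N isT HsaN HbN' HbN s us ss Hev).
- exact: (@G L 1 5 N isT HsaN HbN' HbN s us ss Hev).
Qed.
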